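(* Let $G$ be a $1$-series-parallel graph containing the edge $X_SX_T$. Then there exist $\epsilon>0$ and $N_0$ (depending only on $G$) such that for every $N\ge N_0$, every join instance over $G$ in which each edge relation has exactly $N$ tuples has $m$-width at most $2-\epsilon$.
   Context: A join over a graph $G$: each vertex is an attribute and each edge $\{X,Y\}$ is a binary relation with schema $(X,Y)$. A $1$-series-parallel graph consists of a source vertex $X_S$, a sink vertex $X_T$, and any number of paths of arbitrary length from $X_S$ to $X_T$, pairwise sharing no vertices other than $X_S,X_T$. For a join query $\mathcal R$ (set of relations, attribute set $\mathcal A$): $\mathrm{IN}=\sum_R|R|$, $\log=\log_{\mathrm{IN}}$; for a relation $S$, $A\subseteq\mathsf{attr}(S)$, $v\in\pi_A(S)$: $\mathsf{deg}(v,S,A)=|\{t\in S:\pi_A(t)=v\}|$; $d_{S,A}=\max_v\mathsf{deg}(v,S,A)$ for $A\ne\emptyset$, $d_{S,\emptyset}=|S|$; $d(A,B,S)=\log d_{\pi_B(S),A}$. Degree configurations: buckets $B_l=[2^l,2^{l+1})$ ordered by index; $c\in\mathcal C_2$ maps each $(R,A)$, $A\subseteq\mathsf{attr}(R)$, to a bucket with $A'\subseteq A\Rightarrow c(R,A)\le c(R,A')$, $c(R,\mathsf{attr}(R))=B_0$, $c(R,\emptyset)=B_{\lfloor\log_2|R|\rfloor}$; $R(c)=\{t\in R:\forall A,\ \mathsf{deg}(\pi_A(t),R,A)\in c(R,A)\}$, $\mathcal R(c)=\{R(c)\}$. For a set $\mathcal S$ of relations and $F\subseteq\mathcal A$, $m_F(\mathcal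 S)$ is the maximum of $s_F$ subject to $s_\emptyset=0$; $s_G\le s_{G'}$ for $G\subseteq G'$; $s_{B\cup E}\le s_{A\cup E}+d(A,B,S)$ for all $S\in\mathcal S$, $E\subseteq\mathcal A$, $A\subseteq B\subseteq\mathsf{attr}(S)$. A GHD of $\mathcal S$ is a pair $(\mathcal T,\chi)$, $\mathcal T$ a tree, $\chi$ mapping nodes to subsets of $\mathcal A$, such that every $S$ has a node $t$ with $\mathsf{attr}(S)\subseteq\chi(t)$ and for each attribute the nodes containing it form a connected subtree. $\mathsf{MW}(D,\mathcal S)=\max_t m_{\chi(t)}(\mathcal S)$, $\mathsf{MW}(\mathcal S)=\min_D\mathsf{MW}(D,\mathcal S)$, and the $m$-width of the instance is $\max_{c\in\mathcal C_2}\mathsf{MW}(\mathcal R(c))$. *)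

(* Defs.v *)
From Stdlib Require Import Reals.
From mathcomp Require Import all_boot.
Set Implicit Arguments. Unset Strict Implicit. Unset Printing Implicit Defensive.

(* G is 1-series-parallel with source s and sink t iff s <> t and there *)
(* is a list ps of paths (each given by its list of internal vertices), *)
(* internal vertices pairwise distinct and distinct from s,t, every     *)
(* vertex being s, t or internal to some path, and E being exactly the  *)
(* set of edges of the paths s -> p -> t.                               *)
Definition path_edges (V : finType) (s t : V) (p : seq V) : seq {set V} :=
  let q := s :: rcons p t in [seq [set x.1; x.2] | x <- zip q (behead q)].

Definition is_1SP (V : finType) (E : {set {set V}}) (s t : V) : Prop :=
  s != t /\
  exists ps : seq (seq V),
    [/\ uniq (s :: t :: flatten ps),
        (forall v : V, v \in s :: t :: flatten ps)
      & E = [set e | has (fun p => e \in path_edges s t p) ps]].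

(* Join instances: tuples are partial assignments V -> option D; a     *)
(* relation with schema e is a set of tuples whose support is exactly e.*)
Definition tup (V D : finType) := {ffun V -> option D}.
Definition relation (V D : finType) := {set tup V D}.

Definition proj (V D : finType) (A : {set V}) (u : tup V D) : tup V D :=
  [ffun x => if x \in A then u x else None].
Definition projR (V D : finType) (A : {set V}) (S : relation V D) : relation V D :=
  [set proj A u | u in S].

Definition deg (V D : finType) (v : tup V D) (S : relation V D) (A : {set V}) : nat :=
  #|[set u in S | proj A u == v]|.

Definition dmax (V D : finType) (S : relation V D) (A : {set V}) : nat :=
  if A == set0 then #|S| else \max_(v in projR A S) deg v S A.

Definition IN (V D : finType) (E : {set {set V}}) (I : {set V} -> relation V D) : nat :=
  \sum_(e in E) #|I e|.

(* log_n x  (Stdlib convention: ln x = 0 for x <= 0) *)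
Definition logb (n x : nat) : R := Rdiv (ln (INR x)) (ln (INR n)).

Definition dcoef (V D : finType) (n : nat) (A B : {set V}) (S : relation V D) : R :=
  logb n (dmax (projR B S) A).

(* Feasible points of the LP defining m_F(S), for the set of relations   *)
(* S = {Sc e : e in E} (relation Sc e has schema e), log base n.         *)
Definition feasible (V D : finType) (n : nat) (E : {set {set V}})
    (Sc : {set V} -> relation V D) (s : {set V} -> R) : Prop :=
  s set0 = R0 /\
  (forall G G' : {set V}, G \subset G' -> Rle (s G) (s G')) /\
  (forall e, e \in E -> forall Ex A B : {set V}, A \subset B -> B \subset e ->
     Rle (s (B :|: Ex)) (Rplus (s (A :|: Ex)) (dcoef n A B (Sc e)))).

Definition m_le (V D : finType) (n : nat) (E : {set {set V}})
    (Sc : {set V} -> relation V D) (F : {set V}) (w : R) : Prop :=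
  forall s, feasible n E Sc s -> Rle (s F) w.

(* Trees on nodes 'I_k.+1 given by a parent array (node 0 is the root). *)
Definition tree_adj (k : nat) (par : 'I_k.+1 -> 'I_k.+1) : rel 'I_k.+1 :=
  fun i j => ((0 < i) && (par i == j)) || ((0 < j) && (par j == i)).

Definition is_GHD (V : finType) (E : {set {set V}}) (k : nat)
    (par : 'I_k.+1 -> 'I_k.+1) (chi : 'I_k.+1 -> {set V}) : Prop :=
  (forall i : 'I_k.+1, 0 < i -> par i < i) /\
  (forall e, e \in E -> exists i, e \subset chi i) /\
  (forall (x : V) (i j : 'I_k.+1), x \in chi i -> x \in chi j ->
     connect [rel a b | [&& tree_adj par a b, x \in chi a & x \in chi b]] i j).

Definition MW_le (V D : finType) (n : nat) (E : {set {set V}})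
    (Sc : {set V} -> relation V D) (w : R) : Prop :=
  exists (k : nat) (par : 'I_k.+1 -> 'I_k.+1) (chi : 'I_k.+1 -> {set V}),
    is_GHD E par chi /\ forall i, m_le n E Sc (chi i) w.

(* Degree configurations c in C_2: c e A is the bucket index l of B_l. *)
Definition is_config (V D : finType) (E : {set {set V}})
    (I : {set V} -> relation V D) (c : {set V} -> {set V} -> nat) : Prop :=
  forall e, e \in E ->
    [/\ (forall A A' : {set V}, A' \subset A -> A \subset e -> c e A <= c e A'),
        c e e = 0
      & 2 ^ (c e set0) <= #|I e| < 2 ^ (c e set0).+1].

Definition Rc (V D : finType) (I : {set V} -> relation V D)
    (c : {set V} -> {set V} -> nat) (e : {set V}) : relation V D :=
  [set u in I e | [forall A : {set V}, (A \subset e) ==>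
     (2 ^ (c e A) <= deg (proj A u) (I e) A < 2 ^ (c e A).+1)]].

Definition mwidth_le (V D : finType) (E : {set {set V}})
    (I : {set V} -> relation V D) (w : R) : Prop :=
  forall c, is_config E I c -> MW_le (IN E I) E (Rc I c) w.

Definition instance_N (V D : finType) (E : {set {set V}})
    (I : {set V} -> relation V D) (N : nat) : Prop :=
  forall e, e \in E ->
    #|I e| = N /\ (forall u, u \in I e -> forall x : V, (u x != None) = (x \in e)).

(* Main.v *)
Require Import Defs.
From Stdlib Require Import Reals.
From mathcomp Require Import all_boot.
From Stdlib Require Import Lra Lia.
From mathcomp Require Import zify.
Set Implicit Arguments. Unset Strict Implicit. Unset Printing Implicit Defensive.

Lemma card_projR (V D : finType) (A : {set V}) (S : relation V D) :
  #|projR A S| <= #|S|.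
Proof. exact: leq_imset_card. Qed.

Lemma Rc_sub (V D : finType) (I : {set V} -> relation V D) c e :
  Rc I c e \subset I e.
Proof. by apply/subsetP => u; rewrite inE => /andP[]. Qed.

Lemma proj_proj (V D : finType) (A B : {set V}) (u : tup V D) :
  A \subset B -> proj A (proj B u) = proj A u.
Proof.
move=> AB; apply/ffunP => x; rewrite !ffunE.
case: ifP => // xA; by rewrite (subsetP AB x xA).
Qed.

Lemma heavy_count (V D : finType) (I : {set V} -> relation V D) c (e : {set V}) (v : V) :
  v \in e ->
  #|projR [set v] (Rc I c e)| * 2 ^ (c e [set v]) <= #|I e|.
Proof.
move=> ve.
set P := projR [set v] (Rc I c e).
have PS : P \subset (proj [set v]) @: I e.
  apply/subsetP => w /imsetP [u uR ->]; apply/imsetP; exists u => //.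
  exact: (subsetP (Rc_sub I c e)).
have -> : #|I e| = \sum_(w in (proj [set v]) @: I e) \sum_(u in I e | proj [set v] u == w) 1.
  by rewrite -sum1_card (partition_big_imset (proj [set v])).
rewrite (big_setID P) /= (setIidPr PS).
apply: leq_trans (leq_addr _ _).
rewrite -sum_nat_const; apply: leq_sum => w /imsetP [u uR ->].
move: uR; rewrite inE => /andP [uI /forallP /(_ [set v])].
rewrite sub1set ve /= => /andP [H _].
apply: (leq_trans H).
rewrite /deg sum1_card; apply: subset_leq_card; apply/subsetP => x.
by rewrite !inE.
Qed.

Lemma light_deg (V D : finType) (I : {set V} -> relation V D) c (e : {set V}) (v : V) :
  v \in e ->
  dmax (projR e (Rc I c e)) [set v] <= 2 ^ (c e [set v]).+1.
Proof.
move=> ve.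
rewrite /dmax.
have -> : ([set v] == set0) = false by apply/negbTE/set0Pn; exists v; rewrite inE.
apply/bigmax_leqP => w /imsetP [u' /imsetP [u uR ->] ->].
rewrite (proj_proj _ (_ : [set v] \subset e)); last by rewrite sub1set.
move: (uR); rewrite inE => /andP [uI /forallP /(_ [set v])].
rewrite sub1set ve /= => /andP [_ H].
apply: leq_trans (ltnW H).
rewrite /deg.
have -> : [set u0 in projR e (Rc I c e) | proj [set v] u0 == proj [set v] u] =
  proj e @: [set u0 in Rc I c e | proj [set v] u0 == proj [set v] u].
  apply/setP => x; rewrite inE; apply/andP/imsetP.
  - case=> /imsetP [y yR ->]; rewrite proj_proj ?sub1set // => Hy.
    by exists y => //; rewrite inE yR.
  - case=> y; rewrite inE => /andP [yR Hy] ->; split; first by apply/imsetP; exists y.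
    by rewrite proj_proj ?sub1set.
apply: leq_trans (leq_imset_card _ _) _.
apply: subset_leq_card; apply/subsetP => x; rewrite !inE => /andP [xR ->].
by move: xR => /andP [-> _].
Qed.
Section RealB.
Local Open Scope R_scope.

Lemma ln_le' x y : 0 < x -> x <= y -> ln x <= ln y.
Proof. move=> h [h'|->]; [by left; apply: ln_increasing | lra]. Qed.

Lemma ln_INR0 : ln (INR 0) = 0.
Proof. rewrite /ln; case: (Rlt_dec 0 (INR 0)) => //= h; exfalso; simpl in h; lra. Qed.

Lemma lnN_ge0 x : (0 <= ln (INR x)).
Proof.
case: x => [|x]; first by rewrite ln_INR0; lra.
rewrite -ln_1; apply: ln_le'; first lra.
rewrite S_INR; have := pos_INR x; lra.
Qed.

Lemma INR_gt0 x : (0 < x)%N -> (0 < INR x).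
Proof. by move=> h; apply: lt_0_INR; apply/ltP. Qed.

Lemma lnN_le x y : (x <= y)%N -> (ln (INR x) <= ln (INR y)).
Proof.
case: x => [|x] h; first by rewrite ln_INR0; apply: lnN_ge0.
apply: ln_le'; first exact: INR_gt0.
by apply: le_INR; apply/leP.
Qed.

Lemma lnN_lt x y : (0 < x)%N -> (x < y)%N -> (ln (INR x) < ln (INR y)).
Proof.
move=> h0 h; apply: ln_increasing; first exact: INR_gt0.
by apply: lt_INR; apply/ltP.
Qed.

Lemma lnN_mul x y : (0 < x)%N -> (0 < y)%N -> ln (INR (x * y)%N) = (ln (INR x) + ln (INR y)).
Proof. move=> hx hy; rewrite mult_INR ln_mult //; exact: INR_gt0. Qed.

Lemma INR_expn x k : INR (x ^ k)%N = INR x ^ k.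
Proof. elim: k => [|k IH] //=; by rewrite expnS mult_INR IH. Qed.

Lemma lnN_pow x k : (0 < x)%N -> ln (INR (x ^ k)%N) = (INR k * ln (INR x)).
Proof. move=> hx; rewrite -ln_pow; last exact: INR_gt0. by rewrite INR_expn. Qed.

Lemma lnN_pos n : (1 < n)%N -> (0 < ln (INR n)).
Proof. move=> h; rewrite -ln_1; apply: ln_increasing; first lra. by apply: (lt_INR 1); apply/ltP. Qed.

Lemma logb_le1 n x : (1 < n)%N -> (x <= n)%N -> (logb n x <= 1).
Proof.
move=> hn hx; rewrite /logb; have hl := lnN_pos hn.
have := lnN_le hx => h.
apply: (Rmult_le_reg_r (ln (INR n))) => //.
rewrite /Rdiv Rmult_assoc Rinv_l; lra.
Qed.

Lemma logb_ge0 n x : (1 < n)%N -> (0 <= logb n x).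
Proof.
move=> hn; rewrite /logb; have hl := lnN_pos hn; have := lnN_ge0 x => h.
apply: Rle_mult_inv_pos => //.
Qed.

Lemma logb_mono n x y : (1 < n)%N -> (x <= y)%N -> (logb n x <= logb n y).
Proof.
move=> hn hxy; rewrite /logb; have hl := lnN_pos hn.
apply: Rmult_le_compat_r; first by left; apply: Rinv_0_lt_compat.
exact: lnN_le.
Qed.

Lemma logb_heavy n N d k M : (1 < n)%N -> (0 < M)%N -> (N <= n)%N -> (d * 2 ^ k <= N)%N -> (n <= (2 ^ k) ^ M)%N ->
  (logb n d <= 1 - / INR M).
Proof.
move=> hn hM hN hd hk.
have hl := lnN_pos hn.
have hm : (0 < INR M) by exact: INR_gt0.
have hm1 : (1 <= INR M) by apply: (le_INR 1); apply/leP.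
have y0 : (0 <= ln (INR (2 ^ k))) by apply: lnN_ge0.
have h2 := lnN_le hk; rewrite lnN_pow ?expn_gt0 // in h2.
case: d hd => [|d] hd.
  rewrite /logb ln_INR0 /Rdiv Rmult_0_l.
  have : (/ INR M <= 1) by rewrite -Rinv_1; apply: Rinv_le_contravar; lra.
  lra.
have h1 := lnN_le (leq_trans hd hN); rewrite lnN_mul ?expn_gt0 // in h1.
rewrite /logb.
apply: (Rmult_le_reg_r (ln (INR n) * INR M)); first by apply: Rmult_lt_0_compat.
have -> : (ln (INR d.+1) / ln (INR n) * (ln (INR n) * INR M) = ln (INR d.+1) * INR M)
  by field; lra.
have -> : ((1 - / INR M) * (ln (INR n) * INR M) = ln (INR n) * INR M - ln (INR n))
  by field; lra.
nra.
Qed.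

Lemma logb_light n d k M : (1 < n)%N -> (0 < M)%N -> (d <= 2 ^ k.+1)%N -> ((2 ^ k) ^ M < n)%N -> (2 ^ M <= n)%N ->
  (logb n d <= 2 / INR M).
Proof.
move=> hn hM hd hk h2M.
have hl := lnN_pos hn.
have hm : (0 < INR M) by exact: INR_gt0.
have y0 : (0 <= ln (INR (2 ^ k))) by apply: lnN_ge0.
have hp : (0 < (2 ^ k) ^ M)%N by rewrite !expn_gt0.
have h2 := lnN_lt hp hk; rewrite lnN_pow ?expn_gt0 // in h2.
have h3 := lnN_le h2M; rewrite lnN_pow // in h3.
have l20 : (0 <= ln (INR 2)) by apply: lnN_ge0.
case: d hd => [|d] hd.
  rewrite /logb ln_INR0 /Rdiv Rmult_0_l.
  apply: Rle_mult_inv_pos; lra.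
have h1 := lnN_le hd; rewrite expnS lnN_mul ?expn_gt0 // in h1.
rewrite /logb.
apply: (Rmult_le_reg_r (ln (INR n) * INR M)); first by apply: Rmult_lt_0_compat.
have -> : (ln (INR d.+1) / ln (INR n) * (ln (INR n) * INR M) = ln (INR d.+1) * INR M)
  by field; lra.
have -> : (2 / INR M * (ln (INR n) * INR M) = 2 * ln (INR n)) by field; lra.
nra.
Qed.

End RealB.

Lemma bigcup_seqP (T : finType) (I : eqType) (r : seq I) (F : I -> {set T}) (x : T) :
  x \in \bigcup_(i <- r) F i <-> exists2 i, i \in r & x \in F i.
Proof.
elim: r => [|i r IH]; first by rewrite big_nil inE; split => // -[i].
rewrite big_cons inE; split.
- case/orP => [h|/IH [j jr hj]]; first by exists i; rewrite ?inE ?eqxx.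
  by exists j; rewrite // inE jr orbT.
- case=> j; rewrite inE => /orP [/eqP -> -> //| jr hj].
  by apply/orP; right; apply/IH; exists j.
Qed.

Section Graph.
Variables (V : finType) (s t : V) (ps : seq (seq V)).
Hypothesis Huniq : uniq (s :: t :: flatten ps).
Hypothesis Hcov : forall v : V, v \in s :: t :: flatten ps.
Variable hv : seq V -> nat -> bool.

Let fl := flatten ps.
Definition qs (p : seq V) := s :: rcons p t.
Definition jp (p : seq V) := find (hv p) (iota 0 (size p).+1).
Definition anchor (p : seq V) := nth s (qs p) (jp p).
Definition Wb : {set V} := [set s; t] :|: \bigcup_(p <- ps) [set x in take (jp p) p].
Definition pathof (v : V) := nth [::] ps (find (fun p => v \in p) ps).

Definition bag (x : option V) : {set V} :=
  match x with
  | None => Wb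
  | Some v => if v \in fl then
      (let p := pathof v in let i := index v p in
       if jp p <= i then [set anchor p; nth s (qs p) i.+1; nth s (qs p) i.+2] else set0)
      else set0
  end.

Definition pa (x : option V) : option V :=
  match x with
  | None => None
  | Some v => if v \in fl then
      (let p := pathof v in let i := index v p in
       if i.+1 < size p then Some (nth s (qs p) i.+2) else None)
      else None
  end.

Definition rk (x : option V) : nat :=
  match x with
  | None => 0
  | Some v => if v \in fl then size fl - index v fl else (size fl + 1 + (v == t))
  end.

Lemma uniq_split : [/\ s != t, s \notin fl, t \notin fl & uniq fl].
Proof. by move: Huniq; rewrite /= inE negb_or => /andP [/andP [-> ->] /andP [-> ->]]. Qed.

Lemma st_neq : s != t. Proof. by case: uniq_split. Qed.
Lemma s_notin : s \notin fl. Proof. by case: uniq_split. Qed.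
Lemma t_notin : t \notin fl. Proof. by case: uniq_split. Qed.
Lemma fl_uniq : uniq fl. Proof. by case: uniq_split. Qed.

Lemma path_sub p v : p \in ps -> v \in p -> v \in fl.
Proof. by move=> pin vin; apply/flattenP; exists p. Qed.

Lemma path_uniq p : p \in ps -> uniq p.
Proof.
move: fl_uniq; rewrite /fl; elim: ps => //= p0 ps' IH.
rewrite cat_uniq inE => /and3P [u0 _ u1] /orP [/eqP -> // | pin].
exact: IH.
Qed.

Lemma path_same p p' v : p \in ps -> p' \in ps -> v \in p -> v \in p' -> p = p'.
Proof.
move: fl_uniq; rewrite /fl; elim: ps => //= p0 ps' IH.
rewrite cat_uniq => /and3P [u0 hd u1].
rewrite !inE => /orP [/eqP -> | pin] /orP [/eqP -> | pin'] // vp vp'.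
- by case/hasP: hd; exists v => //; apply/flattenP; exists p'.
- by case/hasP: hd; exists v => //; apply/flattenP; exists p.
- exact: IH.
Qed.

Lemma pathofP v : v \in fl -> pathof v \in ps /\ v \in pathof v.
Proof.
move=> /flattenP [p pin vp].
have hh : has (fun p => v \in p) ps by apply/hasP; exists p.
split; first by apply: mem_nth; rewrite -has_find.
exact: (nth_find [::] hh).
Qed.

Lemma pathof_eq p v : p \in ps -> v \in p -> pathof v = p.
Proof.
move=> pin vp; have [h1 h2] := pathofP (path_sub pin vp).
exact: path_same h1 pin h2 vp.
Qed.

Lemma s_notin_p p : p \in ps -> s \notin p.
Proof. by move=> pin; apply/negP => /(path_sub pin); apply/negP/s_notin. Qed.

Lemma t_notin_p p : p \in ps -> t \notin p.
Proof. by move=> pin; apply/negP => /(path_sub pin); apply/negP/t_notin. Qed.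

Lemma size_qs p : size (qs p) = (size p).+2.
Proof. by rewrite /= size_rcons. Qed.

Lemma qs0 p : nth s (qs p) 0 = s. Proof. by []. Qed.

Lemma qsS p i : i < size p -> nth s (qs p) i.+1 = nth s p i.
Proof. by move=> h; rewrite /= nth_rcons h. Qed.

Lemma qsT p : nth s (qs p) (size p).+1 = t.
Proof. by rewrite /= nth_rcons ltnn eqxx. Qed.

Lemma qs_uniq p : p \in ps -> uniq (qs p).
Proof.
move=> pin; rewrite /qs /= rcons_uniq path_uniq // t_notin_p // mem_rcons inE.
by rewrite negb_or st_neq s_notin_p.
Qed.

Lemma qs_inj p i j : p \in ps -> i < (size p).+2 -> j < (size p).+2 ->
  nth s (qs p) i = nth s (qs p) j -> i = j.
Proof.
move=> pin hi hj /eqP; rewrite nth_uniq ?size_qs ?qs_uniq //; exact/eqP.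
Qed.

Lemma qs_index p v : p \in ps -> v \in p -> nth s (qs p) (index v p).+1 = v.
Proof. by move=> pin vp; rewrite qsS ?index_mem // nth_index. Qed.

Lemma index_fl_succ p i : p \in ps -> i.+1 < size p ->
  index (nth s p i.+1) fl = (index (nth s p i) fl).+1.
Proof.
move: fl_uniq; rewrite /fl; elim: ps => //= p0 ps' IH.
rewrite cat_uniq => /and3P [u0 hd u1].
rewrite inE => /orP [/eqP -> | pin] hi.
- rewrite !index_cat !mem_nth ?(ltnW hi) //.
  by rewrite !index_uniq ?(ltnW hi).
- have notin x : x \in p -> x \notin p0.
    move=> xp; apply/negP => x0; case/hasP: hd; exists x => //.
    by apply/flattenP; exists p.
  rewrite !index_cat !(negbTE (notin _ _)) ?mem_nth ?(ltnW hi) //.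
  by rewrite IH // addnS.
Qed.


Lemma fl_info v : v \in fl ->
  [/\ pathof v \in ps, v \in pathof v, index v (pathof v) < size (pathof v)
    & nth s (pathof v) (index v (pathof v)) = v].
Proof.
move=> vf; have [h1 h2] := pathofP vf.
by split => //; [rewrite index_mem | rewrite nth_index].
Qed.

Lemma at_info p i : p \in ps -> i < size p ->
  let v := nth s p i in [/\ v \in fl, pathof v = p & index v p = i].
Proof.
move=> pin hi v; have vp : v \in p by apply: mem_nth.
split; [exact: path_sub vp | exact: pathof_eq | exact: index_uniq (path_uniq pin)].
Qed.

Lemma bag_at p i : p \in ps -> i < size p -> jp p <= i ->
  bag (Some (nth s p i)) = [set anchor p; nth s (qs p) i.+1; nth s (qs p) i.+2].
Proof.
move=> pin hi hj; have [h1 h2 h3] := at_info pin hi.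
by rewrite /bag h1 h2 h3 hj.
Qed.

Lemma pa_at p i : p \in ps -> i < size p ->
  pa (Some (nth s p i)) = if i.+1 < size p then Some (nth s (qs p) i.+2) else None.
Proof.
move=> pin hi; have [h1 h2 h3] := at_info pin hi.
by rewrite /pa h1 h2 h3.
Qed.

Lemma jp_le p : jp p <= (size p).+1.
Proof. by rewrite /jp; have := find_size (hv p) (iota 0 (size p).+1); rewrite size_iota. Qed.

Lemma qW p l : p \in ps -> (l <= jp p) || (l == (size p).+1) -> l <= (size p).+1 ->
  nth s (qs p) l \in Wb.
Proof.
move=> pin hl hs.
case: l hl hs => [|l] hl hs; first by rewrite /Wb !inE eqxx.
have [hlt | heq] : l < size p \/ l = size p by lia.
  2: {
  by rewrite heq qsT /Wb !inE eqxx orbT. }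
have hj : l.+1 <= jp p by move: hl; rewrite eqSS (ltn_eqF hlt) orbF.
rewrite qsS // /Wb inE; apply/orP; right.
apply/bigcup_seqP; exists p => //; rewrite inE in_take ?mem_nth //.
by rewrite index_uniq ?path_uniq.
Qed.

Lemma anchor_W p : p \in ps -> jp p <= size p -> anchor p \in Wb.
Proof. move=> pin h; apply: qW => //; first by rewrite leqnn. exact: leqW. Qed.

Lemma notW p i : p \in ps -> i < size p -> jp p <= i -> nth s p i \notin Wb.
Proof.
move=> pin hi hj; have [h1 h2 h3] := at_info pin hi.
rewrite /Wb !inE; apply/negP => /orP [/orP [/eqP e | /eqP e] | ].
- by move: h1; rewrite e; apply/negP/s_notin.
- by move: h1; rewrite e; apply/negP/t_notin.
move=> /bigcup_seqP [p' p'in]; rewrite inE => hin.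
have vp' := mem_take hin.
have ep : p' = p by apply: path_same p'in pin vp' (mem_nth _ hi).
move: hin; rewrite ep in_take ?mem_nth // h3.
by rewrite ltnNge hj.
Qed.

Lemma anchor_parent p i : p \in ps -> i < size p -> jp p <= i ->
  anchor p \in bag (pa (Some (nth s p i))).
Proof.
move=> pin hi hj; rewrite pa_at //.
case: ifP => h.
  rewrite qsS // bag_at // ?inE ?eqxx //; exact: leqW.
by apply: anchor_W => //; apply: leq_trans hj (ltnW hi).
Qed.

Lemma top_crit (x : V) : exists r, forall y, x \in bag y ->
  y = r \/ (y != None /\ x \in bag (pa y)).
Proof.
exists (if x \in Wb then None else Some x) => -[v|] hx; last by rewrite /= in hx; rewrite hx; left.
have hv' : v \in fl by move: hx; rewrite /bag; case: ifP => //; rewrite inE.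
have [h1 h2 h3 h4] := fl_info hv'.
set p := pathof v in h1 h2 h3 h4; set i := index v p in h3 h4.
case: (leqP (jp p) i) => hj; last first.
  by move: hx; rewrite /bag hv' -/p -/i leqNgt hj inE.
rewrite -h4 bag_at // !inE in hx.
case/orP: hx => [/orP [] | ] /eqP ->.
- by right; split => //; rewrite -h4; apply: anchor_parent.
- by left; rewrite qsS // h4; have := notW h1 h3 hj; rewrite h4 => /negbTE ->.
- right; split => //; rewrite -h4 pa_at //; case: ifP => h.
    rewrite qsS // bag_at //; last exact: leqW hj.
    by rewrite !inE qsS // eqxx orbT.
  have -> : i.+1 = size p by apply/eqP; rewrite eqn_leq h3 leqNgt h.
  by rewrite qsT /Wb !inE eqxx orbT.
Qed.


Lemma rk_None : rk None = 0. Proof. by []. Qed.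

Lemma rk_pa y : y != None -> rk (pa y) < rk y.
Proof.
case: y => [v|] // _.
rewrite /pa /rk; case vf: (v \in fl); last by rewrite /=; lia.
have [h1 h2 h3 h4] := fl_info vf.
set p := pathof v in h1 h2 h3 h4 *; set i := index v p in h3 h4 *.
have hvf : index v fl < size fl by rewrite index_mem.
case: ifP => h; last by rewrite /= subn_gt0.
rewrite qsS //.
have [w1 _ _] := at_info h1 h.
rewrite w1 (index_fl_succ h1 h) h4; lia.
Qed.

Lemma rk_inj : injective rk.
Proof.
have Hs v : v \in fl -> 0 < size fl - index v fl <= size fl.
  by move=> vf; rewrite leq_subr subn_gt0 index_mem vf.
case=> [v|] [w|] //=.
- case: ifP => vf; case: ifP => wf.
  + move=> e; congr Some; apply: (index_inj s vf wf).
    have := Hs _ vf; have := Hs _ wf; lia.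
  + have := Hs _ vf; lia.
  + have := Hs _ wf; lia.
  + move=> e; congr Some.
    have cv := Hcov v; have cw := Hcov w.
    rewrite !inE vf wf !orbF in cv cw.
    case/orP: cv => /eqP ev; case/orP: cw => /eqP ew; subst v w => //;
    move: e; rewrite ?eqxx ?(negbTE st_neq) /=; lia.
- case: ifP => vf; [have := Hs _ vf; lia | lia].
- case: ifP => wf; [have := Hs _ wf; lia | lia].
Qed.

Lemma cover_edge p m : p \in ps -> m <= size p ->
  exists y, [set nth s (qs p) m; nth s (qs p) m.+1] \subset bag y.
Proof.
move=> pin hm.
have hs2 (a b : V) (X : {set V}) : a \in X -> b \in X -> [set a; b] \subset X.
  by move=> ha hb; apply/subsetP => z; rewrite !inE => /orP [] /eqP ->.
have [hmj | [hmj | [hmj hms]]] :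
  m < jp p \/ jp p < m \/ (m = jp p /\ (m < size p \/ m = size p)) by lia.
- exists None; apply: hs2; apply: qW => //; first by rewrite ltnW.
  + exact: leq_trans hm (leqnSn _).
  + by rewrite hmj.
- case: m hm hmj => [|m] // hm hmj.
  exists (Some (nth s p m)); rewrite bag_at //; apply: hs2; by rewrite !inE eqxx ?orbT.
- case: hms => hms.
  + exists (Some (nth s p m)); rewrite bag_at; try by rewrite -?hmj.
    apply: hs2.
    * by rewrite /anchor -hmj !inE eqxx.
    * by rewrite !inE qsS // eqxx orbT.
  + exists None; apply: hs2; apply: qW => //.
    * by rewrite -hmj leqnn.
    * by rewrite hms leqW.
    * by rewrite hms eqxx orbT.
Qed.

Lemma bag_shape y : bag y = Wb \/ bag y = set0 \/
  exists p i, [/\ p \in ps, i < size p, jp p <= i &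
     bag y = [set anchor p; nth s (qs p) i.+1; nth s (qs p) i.+2]].
Proof.
case: y => [v|]; last by left.
rewrite /bag; case: ifP => vf; last by right; left.
have [h1 h2 h3 h4] := fl_info vf.
case: ifP => hj; last by right; left.
by right; right; exists (pathof v), (index v (pathof v)).
Qed.

End Graph.

Lemma ghd_from_tree (V T : finType) (E : {set {set V}}) (root : T) (B : T -> {set V})
    (pa : T -> T) (f : T -> nat) :
  injective f -> f root = 0 -> (forall x, x != root -> f (pa x) < f x) ->
  (forall e, e \in E -> exists x, e \subset B x) ->
  (forall v, exists r, forall x, v \in B x -> x = r \/ (x != root /\ v \in B (pa x))) ->
  exists k (par : 'I_k.+1 -> 'I_k.+1) (chi : 'I_k.+1 -> {set V}),
    is_GHD E par chi /\ forall i, chi i = set0 \/ exists x, chi i = B x.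
Proof.
move=> finj froot fpa hcov htop.
set k := \max_(x : T) f x.
have fk x : f x <= k by apply: leq_bigmax.
pose node (i : 'I_k.+1) := [pick x | f x == i].
have node_of x : node (inord (f x)) = Some x.
  rewrite /node; case: pickP => [y /eqP h | H].
    by congr Some; apply: finj; rewrite h inordK // ltnS.
  by have := H x; rewrite inordK ?ltnS // eqxx.
have node_val i x : node i = Some x -> f x = i.
  by rewrite /node; case: pickP => // y /eqP h [<-].
pose chi (i : 'I_k.+1) := if node i is Some x then B x else set0.
pose par (i : 'I_k.+1) : 'I_k.+1 :=
  if node i is Some x then (if x == root then ord0 else inord (f (pa x))) else ord0.
have chi_of x : chi (inord (f x)) = B x by rewrite /chi node_of.
exists k, par, chi; split; last first.
  move=> i; rewrite /chi; case: (node i) => [x|]; [right; by exists x | by left].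
split; [|split].
- move=> i i0; rewrite /par; case e: (node i) => [x|] //.
  have fx := node_val _ _ e.
  case: eqP => [xr|/eqP xr]; first by move: fx i0; rewrite xr froot => <-.
  rewrite inordK; first by rewrite -fx fpa.
  by rewrite ltnS fk.
- move=> e /hcov [x hx]; exists (inord (f x)); by rewrite chi_of.
- move=> v i j hi hj.
  set rl := [rel a b | [&& tree_adj par a b, v \in chi a & v \in chi b]].
  have [r hr] := htop v.
  have key0 : forall n (i0 : 'I_k.+1), val i0 = n -> v \in chi i0 -> connect rl i0 (inord (f r)).
    elim/ltn_ind => n IH i0 hn hv.
    rewrite /chi in hv; case e: (node i0) => [x|]; rewrite e in hv; last by rewrite inE in hv.
    have fx := node_val _ _ e.
    case: (hr x hv) => [xr | [xr hp]].
      have -> : i0 = inord (f r) by apply: val_inj; rewrite /= inordK -xr ?fx // ltnS fk.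
      exact: connect0.
    have hlt : f (pa x) < f x by apply: fpa.
    apply: (connect_trans (y := inord (f (pa x)))); last first.
      apply: (IH (f (pa x))); last by rewrite chi_of.
        by move: hlt hn; rewrite fx => h <-.
      by rewrite /= inordK // ltnS fk.
    apply: connect1.
    have i0pos : 0 < i0 by move: hlt; rewrite fx; lia.
    have hpar : par i0 = inord (f (pa x)) by rewrite /par e (negbTE xr).
    rewrite /rl /= chi_of hp /tree_adj hpar eqxx i0pos /=.
    by rewrite /chi e hv.
  have key i0 : v \in chi i0 -> connect rl i0 (inord (f r)) by apply: key0.
  have hsym : symmetric rl.
    by move=> a b; rewrite /rl /= /tree_adj orbC; case: (v \in chi a); case: (v \in chi b); rewrite ?andbT ?andbF.
  rewrite (connect_trans (key i hi)) // (sym_connect_sym hsym) key //.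
Qed.

Lemma path_edgesP (V : finType) (s t : V) p e :
  e \in path_edges s t p <->
  exists2 m, m <= size p & e = [set nth s (qs s t p) m; nth s (qs s t p) m.+1].
Proof.
rewrite /path_edges /=.
have hsz : size (zip (s :: rcons p t) (rcons p t)) = (size p).+1.
  by rewrite size_zip /= size_rcons minnE subSnn subn1.
split.
- case/mapP => x /(nthP (s, s)) [m hm <-] ->.
  rewrite hsz in hm; exists m => //.
  by rewrite nth_zip_cond hsz hm.
- case=> m hm ->; apply/mapP; exists (nth (s, s) (zip (s :: rcons p t) (rcons p t)) m).
    by apply: mem_nth; rewrite hsz.
  by rewrite nth_zip_cond hsz ltnS hm.
Qed.

Section Costs.
Local Open Scope R_scope.
Variables (V D : finType) (s t : V) (ps : seq (seq V)) (E : {set {set V}})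
  (I : {set V} -> relation V D) (c : {set V} -> {set V} -> nat) (N M : nat)
  (sg : {set V} -> R).
Hypothesis Hu : uniq (s :: t :: flatten ps).
Hypothesis HE : E = [set e | has (fun p => e \in path_edges s t p) ps].
Hypothesis HI : instance_N E I N.
Hypothesis HNn : (N <= IN E I)%N.
Hypothesis Hn1 : (1 < IN E I)%N.
Hypothesis HM : (0 < M)%N.
Hypothesis H2M : (2 ^ M <= IN E I)%N.
Hypothesis Hf : feasible (IN E I) E (Rc I c) sg.

Let n := IN E I.
Definition hvc (p : seq V) (m : nat) : bool :=
  let q := qs s t p in
  (n <= (2 ^ c [set nth s q m; nth s q m.+1] [set nth s q m]) ^ M)%N.

Lemma edge_in p m : p \in ps -> (m <= size p)%N ->
  [set nth s (qs s t p) m; nth s (qs s t p) m.+1] \in E.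
Proof.
move=> pin hm; rewrite HE inE; apply/hasP; exists p => //.
by apply/path_edgesP; exists m.
Qed.

Lemma sg0 : sg set0 = 0.
Proof. by case: Hf. Qed.

Lemma sg_mono (G G' : {set V}) : G \subset G' -> sg G <= sg G'.
Proof. by case: Hf => _ [h _]; apply: h. Qed.

Lemma stepL (W A B e : {set V}) : e \in E -> A \subset W -> A \subset B -> B \subset e ->
  sg (W :|: B) <= sg W + dcoef n A B (Rc I c e).
Proof.
move=> he hAW hAB hBe; case: Hf => _ [_ h].
have := h e he W A B hAB hBe.
by rewrite setUC (setUidPr hAW).
Qed.

Lemma dc_edge (e : {set V}) : e \in E -> dcoef n set0 e (Rc I c e) <= 1.
Proof.
move=> he; rewrite /dcoef /dmax eqxx.
apply: logb_le1 => //.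
apply: leq_trans (card_projR _ _) _.
apply: leq_trans (subset_leq_card (Rc_sub I c e)) _.
by have [-> _] := HI he.
Qed.

Lemma dc_heavy (e : {set V}) v : e \in E -> v \in e -> (n <= (2 ^ c e [set v]) ^ M)%N ->
  dcoef n set0 [set v] (Rc I c e) <= 1 - / INR M.
Proof.
move=> he ve hh; rewrite /dcoef /dmax eqxx.
apply: (logb_heavy (N := N) (k := c e [set v])) => //.
have [hN _] := HI he.
by rewrite -hN; apply: heavy_count.
Qed.

Lemma dc_light (e : {set V}) v : e \in E -> v \in e -> ((2 ^ c e [set v]) ^ M < n)%N ->
  dcoef n [set v] e (Rc I c e) <= 2 / INR M.
Proof.
move=> he ve hl; rewrite /dcoef.
apply: (logb_light (k := c e [set v])) => //.
exact: light_deg.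
Qed.

Lemma INR_addn a b : INR (a + b)%N = INR a + INR b.
Proof. exact: plus_INR. Qed.

Lemma jp_heavy p i : (i < size p)%N -> (jp hvc p <= i)%N -> hvc p (jp hvc p).
Proof.
move=> hi hj.
have hhas : has (hvc p) (iota 0 (size p).+1).
  by rewrite has_find size_iota; apply: leq_ltn_trans hj _; apply: leqW.
have := nth_find 0%N hhas; rewrite nth_iota; first by rewrite add0n.
by move: hhas; rewrite has_find size_iota.
Qed.

Lemma jp_light p l : (l < jp hvc p)%N -> ~~ hvc p l.
Proof.
move=> hl; have := before_find 0%N hl.
rewrite nth_iota ?add0n => [->//|].
by apply: leq_trans hl (jp_le hvc p).
Qed.

Lemma costT p i : p \in ps -> (i < size p)%N -> (jp hvc p <= i)%N ->
  sg [set anchor s t hvc p; nth s (qs s t p) i.+1; nth s (qs s t p) i.+2] <= 2 - / INR M.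
Proof.
move=> pin hi hj.
set j := jp hvc p in hj *.
have hh := jp_heavy hi hj.
have hjs : (j <= size p)%N by lia.
have ej := edge_in pin hjs.
have ei := edge_in pin hi.
set a := anchor s t hvc p.
have aej : a \in [set nth s (qs s t p) j; nth s (qs s t p) j.+1] by rewrite !inE eqxx.
have aej' : [set a] \subset [set nth s (qs s t p) j; nth s (qs s t p) j.+1] by rewrite sub1set.
have h1 := stepL (W := set0) (A := set0) (B := [set a]) ej (sub0set _) (sub0set _) aej'.
have h2 := dc_heavy ej aej hh.
have h3 := stepL (W := [set a]) (A := set0) ei (sub0set _) (sub0set _) (subxx _).
have h4 := dc_edge ei.
rewrite set0U sg0 in h1.
have -> : [set a; nth s (qs s t p) i.+1; nth s (qs s t p) i.+2] =
  [set a] :|: [set nth s (qs s t p) i.+1; nth s (qs s t p) i.+2] by rewrite setUA.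
lra.
Qed.

Lemma qlW_aux p (X : {set V}) l : p \in ps -> s \in X -> (l < size p)%N ->
  nth s (qs s t p) l \in X :|: [set x in take l p].
Proof.
move=> pin sX; case: l => [|l] hl.
  by rewrite /= inE sX.
have hl' : (l < size p)%N by apply: ltnW.
rewrite qsS //.
have hp : nth s p l \in p by apply: mem_nth.
rewrite !inE in_take //.
by rewrite index_uniq ?(path_uniq Hu) // ?ltnSn ?orbT.
Qed.

Lemma walk p (X : {set V}) l : p \in ps -> s \in X -> (l <= jp hvc p)%N -> (l <= size p)%N ->
  sg (X :|: [set x in take l p]) <= sg X + INR l * (2 / INR M).
Proof.
move=> pin sX; elim: l => [|l IH] hlj hls.
  have -> : [set x in take 0 p] = set0 by apply/setP => z; rewrite !inE take0.
  rewrite setU0 /=; lra.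
have hl : (l < size p)%N by [].
have IH' := IH (ltnW hlj) (ltnW hls).
set Wl := X :|: [set x in take l p] in IH' *.
have el := edge_in pin (ltnW hls).
set ql := nth s (qs s t p) l in el.
have qlW : ql \in Wl by apply: qlW_aux.
have hql1 : [set ql] \subset Wl by rewrite sub1set.
have hql2 : [set ql] \subset [set ql; nth s (qs s t p) l.+1] by rewrite sub1set !inE eqxx.
have hql3 : ql \in [set ql; nth s (qs s t p) l.+1] by rewrite !inE eqxx.
have hs := stepL el hql1 hql2 (subxx _).
have hlight := jp_light hlj.
have hl2 : ((2 ^ c [set ql; nth s (qs s t p) l.+1] [set ql]) ^ M < n)%N.
  by rewrite ltnNge.
have hd' := dc_light el hql3 hl2.
have hmono : sg (X :|: [set x in take l.+1 p]) <= sg (Wl :|: [set ql; nth s (qs s t p) l.+1]).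
  apply: sg_mono; apply/subsetP => z.
  rewrite (take_nth s hl) !inE mem_rcons inE -(qsS s t) //.
  by case/orP => [->|/orP [->|->]]; rewrite ?orbT.
rewrite S_INR; lra.
Qed.

Hypothesis Est : [set s; t] \in E.

Lemma take_minn (p : seq V) j : take (minn j (size p)) p = take j p.
Proof.
case: (leqP j (size p)) => h; first by [].
by rewrite take_size take_oversize // ltnW.
Qed.

Lemma Wcost_gen ps' : {subset ps' <= ps} ->
  sg ([set s; t] :|: \bigcup_(p <- ps') [set x in take (jp hvc p) p]) <=
  1 + INR (sumn [seq minn (jp hvc p) (size p) | p <- ps']) * (2 / INR M).
Proof.
elim: ps' => [|p ps' IH] hsub.
  rewrite big_nil setU0 /=.
  have h := stepL (W := set0) (A := set0) Est (sub0set _) (sub0set _) (subxx _).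
  have := dc_edge Est; rewrite set0U sg0 in h; lra.
have pin : p \in ps by apply: hsub; rewrite inE eqxx.
have hsub' : {subset ps' <= ps} by move=> q hq; apply: hsub; rewrite inE hq orbT.
have IH' := IH hsub'.
rewrite big_cons /= INR_addn.
set R0 := \bigcup_(j <- ps') _ in IH' *.
have -> : [set s; t] :|: ([set x in take (jp hvc p) p] :|: R0) =
  ([set s; t] :|: R0) :|: [set x in take (minn (jp hvc p) (size p)) p].
  apply/setP => z; rewrite !inE take_minn.
  by case: (z \in R0); case: (z \in take _ _); rewrite ?orbT ?orbF.
have sX : s \in [set s; t] :|: R0 by rewrite !inE eqxx.
have := walk pin sX (geq_minl _ _) (geq_minr _ _).
have h2 : 0 <= 2 / INR M.
  have : 0 < INR M by apply: INR_gt0.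
  move=> h; apply: Rle_mult_inv_pos; lra.
move=> hw; rewrite Rmult_plus_distr_r.
set a := INR (minn _ _) in hw *; set b := INR (sumn _) in IH' *; set X0 := sg ([set s; t] :|: R0) in IH' hw *.
lra.
Qed.

Lemma sumn_le : (sumn [seq minn (jp hvc p) (size p) | p <- ps] <= #|V|)%N.
Proof.
apply: (@leq_trans (size (flatten ps))).
  rewrite size_flatten /shape; elim: ps => //= p ps' IH.
  by apply: leq_add => //; apply: geq_minr.
move: Hu => /= /andP [_ /andP [_ u]].
by rewrite -(card_uniqP u) max_card.
Qed.

Lemma Wcost : M = (2 * #|V|).+1 -> sg (Wb s t ps hvc) <= 2 - / INR M.
Proof.
move=> hM.
have h := Wcost_gen (fun q hq => hq).
rewrite /Wb.
have hK := sumn_le.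
set K := sumn _ in h hK.
have hKr : INR K <= INR #|V| by apply: le_INR; apply/leP.
have hm : INR M = 2 * INR #|V| + 1 by rewrite hM -addn1 INR_addn mult_INR.
have hm0 : 0 < INR M by apply: INR_gt0.
have hv0 : 0 <= INR #|V| by apply: pos_INR.
have e1 : 2 / INR M = 2 * / INR M by [].
have e2 : / INR M * INR M = 1 by apply: Rinv_l; lra.
have hi : 0 < / INR M by apply: Rinv_0_lt_compat.
rewrite e1 in h.
have key : (2 * INR K + 1) * / INR M <= 1.
  apply: (Rmult_le_reg_r (INR M)) => //.
  rewrite Rmult_assoc e2; lra.
have key2 : INR K * (2 * / INR M) <= 1 - / INR M.
  have -> : INR K * (2 * / INR M) = (2 * INR K + 1) * / INR M - / INR M by ring.
  lra.
set X0 := sg _ in h *.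
set Y := INR K * (2 * / INR M) in h key2.
lra.
Qed.

End Costs.

Unset Implicit Arguments.

Theorem lemmaF3 (V : finType) (E : {set {set V}}) (s t : V) :
  is_1SP E s t -> [set s; t] \in E ->
  exists eps : R, Rlt R0 eps /\
  exists N0 : nat, forall N : nat, N0 <= N ->
    forall (D : finType) (I : {set V} -> relation V D),
      instance_N E I N -> mwidth_le E I (Rminus 2 eps).
Proof.
move=> [stn [ps [Hu Hc HE]]] Est.
pose M := (2 * #|V|).+1.
have HM : 0 < M by [].
have HMr : Rlt R0 (INR M) by apply: INR_gt0.
exists (Rinv (INR M)); split; first by apply: Rinv_0_lt_compat.
exists (2 ^ M) => N HN D I HI c _.
have HNn : N <= IN E I.
  rewrite /IN (bigD1 [set s; t]) //=; have [-> _] := HI _ Est.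
  exact: leq_addr.
have H2M : 2 ^ M <= IN E I := leq_trans HN HNn.
have Hn1 : 1 < IN E I.
  apply: leq_trans H2M; rewrite -{1}(expn1 2) leq_exp2l //.
pose hv := hvc s t E I c M.
have cov : forall e, e \in E -> exists x, e \subset bag s t ps hv x.
  move=> e; rewrite HE inE => /hasP [p pin /path_edgesP [m hm ->]].
  exact: (cover_edge Hu hv pin hm).
have [k [par [chi [HG Hchi]]]] := ghd_from_tree (E := E) (root := None)
  (B := bag s t ps hv) (pa := pa s t ps) (f := rk t ps) (rk_inj Hu Hc) erefl
  (fun x hx => rk_pa Hu hx) cov (top_crit Hu hv).
exists k, par, chi; split => // i sg Hf.
have Hz : Rle R0 (Rminus 2 (Rinv (INR M))).
  have : Rle (Rinv (INR M)) 1.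
    rewrite -Rinv_1; apply: Rinv_le_contravar; first lra.
    by apply: (le_INR 1); apply/leP.
  lra.
case: (Hchi i) => [-> | [y ->]].
  by rewrite (sg0 Hf).
case: (bag_shape s t ps hv y) => [-> | [-> | [p [i' [pin hi hj ->]]]]].
- exact: (Wcost Hu HE HI HNn Hn1 HM H2M Hf Est).
- by rewrite (sg0 Hf).
- exact: (costT Hu HE HI HNn Hn1 HM H2M Hf pin hi hj).
Qed.
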